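(* Let $I$ and ${\cal Q}_I$ be as in the context. For every chordal sandwich $G'$ of $({\rm int^*}({\cal Q}_I),{\rm forb}({\cal Q}_I))$ there is a truth assignment $\sigma$ such that $\sigma$ is a satisfying assignment for $I$ and $G_\sigma$ is a subgraph of $G'$.
   Context: Instance: $I$ has variables $v_1,\ldots,v_n$ and clauses ${\cal C}_1,\ldots,{\cal C}_m$; each clause is an ordered triple of literals ${\cal C}_j=X\vee Y\vee Z$ with no variable occurring twice in a clause. Literals are $v_i$ or $\overline{v_i}$; $\overline W$ is the negation of $W$. A truth assignment $\sigma$ extends to literals via $\sigma(\overline{v_i})=1-\sigma(v_i)$; it is satisfying if in each clause exactly one literal has value 1. $\Delta_i$ is the set of $j$ such that $v_i$ or $\overline{v_i}$ occurs in ${\cal C}_j$. Ground set ${\cal X}_I$: $\alpha_{v_i},\alpha_{\overline{v_i}}$; $\beta^j_{v_i},\beta^j_{\overline{v_i}}$ ($j\in\Delta_i$); $\gamma^j_1,\gamma^j_2,\gamma^j_3,\lambda^j$ ($1\le j\le m$); $\delta,\mu$. Sets: $B=\{\mu,\delta\}$, $H_{v_i}=\{\alpha_{v_i},\delta\}$, $H_{\overline{v_i}}=\{\alpha_{\overline{v_i}},\delta\}$, $A_i=\{\alpha_{v_i},\alpha_{\overline{v_i}}\}$, $S^j_{v_i}=\{\alpha_{v_i},\beta^j_{v_i}\}$, $S^j_{\overline{v_i}}=\{\alpha_{\overline{v_i}},\beta^j_{\overline{v_i}}\}$ ($j\in\Delta_i$); for ${\cal C}_j=X\vee Y\vee Z$: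 $K^j_{\overline X}=\{\beta^j_X,\gamma^j_1\}$, $K^j_{\overline Y}=\{\beta^j_Y,\gamma^j_2\}$, $K^j_{\overline Z}=\{\beta^j_Z,\gamma^j_3\}$, $K^j_X=\{\beta^j_{\overline X},\lambda^j\}$, $K^j_Y=\{\beta^j_{\overline Y},\lambda^j\}$, $K^j_Z=\{\beta^j_{\overline Z},\lambda^j\}$, $L^j_X=\{\beta^j_{\overline X},\gamma^j_2\}$, $L^j_Y=\{\beta^j_{\overline Y},\gamma^j_3\}$, $L^j_Z=\{\beta^j_{\overline Z},\gamma^j_1\}$, $D^j_p=\{\gamma^j_p,\lambda^j\}$, $F^j=\{\lambda^j,\mu\}$. Objects indexed by a literal mean the one for that literal. ${\cal Q}_I$ is the collection of partial splits: $A_i|B$; $D^j_p|B$ ($p=1,2,3$); $S^j_{v_i}|S^{j'}_{\overline{v_i}}$ ($j,j'\in\Delta_i$); $S^j_{v_i}|K^{j'}_{\overline{v_i}}$, $S^j_{\overline{v_i}}|K^{j'}_{v_i}$ ($j<j'$ in $\Delta_i$); $K^j_{\overline{v_i}}|F^{j'}$, $K^j_{v_i}|F^{j'}$ ($j\in\Delta_i$, $j<j'\le m$); $H_{v_{i'}}|S^j_{v_i}$, $H_{\overline{v_{i'}}}|S^j_{v_i}$, $H_{v_{i'}}|S^j_{\overline{v_i}}$, $H_{\overline{v_{i'}}}|S^j_{\overline{v_i}}$ ($1\le i'<i\le n$, $j\in\Delta_i$); $H_{\overline{v_i}}|F^j$, $H_{v_i}|F^j$ (all $i,j$); for each ${\cal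 C}_j=X\vee Y\vee Z$: $K^j_{\overline X}|K^j_X$, $K^j_{\overline Y}|K^j_Y$, $K^j_{\overline Z}|K^j_Z$, $K^j_{\overline X}|L^j_X$, $K^j_{\overline Y}|L^j_Y$, $K^j_{\overline Z}|L^j_Z$, $S^j_Y|K^j_X$, $S^j_Z|K^j_Y$, $S^j_X|K^j_Z$, $S^j_Z|L^j_X$, $S^j_X|L^j_Y$, $S^j_Y|L^j_Z$. ${\rm int^*}({\cal Q}_I)$: vertices are the 2-sets occurring as cells of members of ${\cal Q}_I$, adjacent iff they intersect. ${\rm forb}({\cal Q}_I)$: same vertices, $P,P'$ adjacent iff $P|P'\in{\cal Q}_I$. A chordal sandwich of $(G_1,G_2)$ (edge-disjoint, same vertex set) is a chordal graph (no induced cycle of length $\ge4$) on that vertex set containing all edges of $G_1$ and none of $G_2$. For a truth assignment $\sigma$: the vertices $S^j_W$ are shoulders, the vertices $K^j_W$, $L^j_W$ are knees; a shoulder or knee indexed by literal $W$ is true if $\sigma(W)=1$. $G_\sigma$ is the graph obtained from ${\rm int^*}({\cal Q}_I)$ by making $B$ adjacent to all true knees and all true shoulders. *)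

(* Defs.v *)
From HB Require Import structures.
From mathcomp Require Import all_boot.
From mathcomp Require Import finmap.

Set Implicit Arguments.
Unset Strict Implicit.
Unset Printing Implicit Defensive.

Local Open Scope fset_scope.

(* Literals: (i, true) is v_i, (i, false) is the negation of v_i.
   Variables are indexed 0..n-1, clauses 0..m-1 (order-preserving shift
   of the paper's 1-based indices). *)
Definition lit := (nat * bool)%type.
Definition lneg (l : lit) : lit := (l.1, ~~ l.2).
Definition lvar (l : lit) : nat := l.1.

Definition clause := (lit * lit * lit)%type.
Definition cX (c : clause) : lit := c.1.1.
Definition cY (c : clause) : lit := c.1.2.
Definition cZ (c : clause) : lit := c.2.

Definition wf_instance (n : nat) (cls : seq clause) : Prop :=
  forall c, c \in cls ->
    [/\ lvar (cX c) < n, lvar (cY c) < n & lvar (cZ c) < n] /\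
    [/\ lvar (cX c) != lvar (cY c), lvar (cX c) != lvar (cZ c)
      & lvar (cY c) != lvar (cZ c)].

Definition default_clause : clause := ((0, true), (0, true), (0, true)).
Definition clause_at (cls : seq clause) (j : nat) : clause :=
  nth default_clause cls j.

Definition inDelta (cls : seq clause) (i j : nat) : bool :=
  (j < size cls) &&
  let c := clause_at cls j in
  [|| lvar (cX c) == i, lvar (cY c) == i | lvar (cZ c) == i].

Inductive atom :=
| Alpha of lit
| Beta of nat & lit
| Gamma of nat & nat         (* gamma^j_p, p = 1,2,3 *)
| Lam of nat
| Delta
| Mu.

Definition atom_enc (a : atom) : nat * nat * nat * bool :=
  match a with
  | Alpha l => (0, 0, l.1, l.2)
  | Beta j l => (1, j, l.1, l.2)
  | Gamma j p => (2, j, p, false)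
  | Lam j => (3, j, 0, false)
  | Delta => (4, 0, 0, false)
  | Mu => (5, 0, 0, false)
  end.

Definition atom_dec (x : nat * nat * nat * bool) : option atom :=
  match x with
  | (0, _, i, b) => Some (Alpha (i, b))
  | (1, j, i, b) => Some (Beta j (i, b))
  | (2, j, p, _) => Some (Gamma j p)
  | (3, j, _, _) => Some (Lam j)
  | (4, _, _, _) => Some Delta
  | (5, _, _, _) => Some Mu
  | _ => None
  end.

Lemma atom_encK : pcancel atom_enc atom_dec.
Proof. by case=> // [[]|? []]. Qed.

HB.instance Definition _ := Countable.copy atom (pcan_type atom_encK).

Definition vtx := {fset atom}.

Definition Bset : vtx := [fset Mu; Delta].
Definition Hset (W : lit) : vtx := [fset Alpha W; Delta].
Definition Aset (i : nat) : vtx := [fset Alpha (i, true); Alpha (i, false)].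
Definition Sset (j : nat) (W : lit) : vtx := [fset Alpha W; Beta j W].
Definition Kset (cls : seq clause) (j : nat) (W : lit) : vtx :=
  let c := clause_at cls j in
  [fset Beta j (lneg W);
        if [|| W == cX c, W == cY c | W == cZ c] then Lam j
        else if lneg W == cX c then Gamma j 1
        else if lneg W == cY c then Gamma j 2
        else Gamma j 3].
Definition LXset (cls : seq clause) (j : nat) : vtx :=
  [fset Beta j (lneg (cX (clause_at cls j))); Gamma j 2].
Definition LYset (cls : seq clause) (j : nat) : vtx :=
  [fset Beta j (lneg (cY (clause_at cls j))); Gamma j 3].
Definition LZset (cls : seq clause) (j : nat) : vtx :=
  [fset Beta j (lneg (cZ (clause_at cls j))); Gamma j 1].
Definition Dset (j p : nat) : vtx := [fset Gamma j p; Lam j].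
Definition Fset (j : nat) : vtx := [fset Lam j; Mu].

Definition pos (i : nat) : lit := (i, true).
Definition ng (i : nat) : lit := (i, false).

(* The collection Q_I of partial splits, as a predicate on ordered pairs
   (P, P') meaning the split P|P'. *)
Definition Qsplit (n : nat) (cls : seq clause) (P P' : vtx) : Prop :=
  let m := size cls in
  (exists i, i < n /\ P = Aset i /\ P' = Bset) \/
  (exists j p, j < m /\ 1 <= p <= 3 /\ P = Dset j p /\ P' = Bset) \/
  (exists i j j', i < n /\ inDelta cls i j /\ inDelta cls i j' /\
     P = Sset j (pos i) /\ P' = Sset j' (ng i)) \/
  (exists i j j', i < n /\ inDelta cls i j /\ inDelta cls i j' /\ j < j' /\
     ((P = Sset j (pos i) /\ P' = Kset cls j' (ng i)) \/
      (P = Sset j (ng i) /\ P' = Kset cls j' (pos i)))) \/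
  (exists i j j', i < n /\ inDelta cls i j /\ j < j' /\ j' < m /\
     ((P = Kset cls j (ng i) \/ P = Kset cls j (pos i)) /\ P' = Fset j')) \/
  (exists i' i j, i' < i /\ i < n /\ inDelta cls i j /\
     (P = Hset (pos i') \/ P = Hset (ng i')) /\
     (P' = Sset j (pos i) \/ P' = Sset j (ng i))) \/
  (exists i j, i < n /\ j < m /\
     (P = Hset (ng i) \/ P = Hset (pos i)) /\ P' = Fset j) \/
  (exists j, j < m /\
     let c := clause_at cls j in
     let X := cX c in let Y := cY c in let Z := cZ c in
     ((P = Kset cls j (lneg X) /\ P' = Kset cls j X) \/
      (P = Kset cls j (lneg Y) /\ P' = Kset cls j Y) \/
      (P = Kset cls j (lneg Z) /\ P' = Kset cls j Z) \/
      (P = Kset cls j (lneg X) /\ P' = LXset cls j) \/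
      (P = Kset cls j (lneg Y) /\ P' = LYset cls j) \/
      (P = Kset cls j (lneg Z) /\ P' = LZset cls j) \/
      (P = Sset j Y /\ P' = Kset cls j X) \/
      (P = Sset j Z /\ P' = Kset cls j Y) \/
      (P = Sset j X /\ P' = Kset cls j Z) \/
      (P = Sset j Z /\ P' = LXset cls j) \/
      (P = Sset j X /\ P' = LYset cls j) \/
      (P = Sset j Y /\ P' = LZset cls j))).

Definition Qvertex (n : nat) (cls : seq clause) (P : vtx) : Prop :=
  exists P', Qsplit n cls P P' \/ Qsplit n cls P' P.

Definition int_star (n : nat) (cls : seq clause) (P P' : vtx) : Prop :=
  [/\ Qvertex n cls P, Qvertex n cls P', P != P' &
      exists x, x \in P /\ x \in P'].

Definition forb (n : nat) (cls : seq clause) (P P' : vtx) : Prop :=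
  Qsplit n cls P P' \/ Qsplit n cls P' P.

Definition is_graph_on (V : vtx -> Prop) (E : vtx -> vtx -> Prop) : Prop :=
  [/\ forall P P', E P P' -> V P /\ V P',
      forall P P', E P P' -> E P' P &
      forall P, ~ E P P].

(* Chordal: no induced cycle of length >= 4, i.e. every cycle
   v_0 v_1 ... v_{k-1} v_0 of k >= 4 distinct vertices has a chord
   (an edge between two cyclically non-consecutive vertices). *)
Definition chordal (E : vtx -> vtx -> Prop) : Prop :=
  forall s : seq vtx, uniq s -> 4 <= size s ->
    (forall i, i < size s -> E (nth fset0 s i) (nth fset0 s (i.+1 %% size s))) ->
    exists i j, [/\ i < j, j < size s, i.+1 != j,
                    ~~ ((i == 0) && (j == (size s).-1)) &
                    E (nth fset0 s i) (nth fset0 s j)].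

Definition chordal_sandwich (V : vtx -> Prop) (E1 E2 E : vtx -> vtx -> Prop)
  : Prop :=
  [/\ is_graph_on V E, chordal E,
      forall P P', E1 P P' -> E P P' &
      forall P P', E2 P P' -> ~ E P P'].

Definition lit_val (sigma : nat -> bool) (W : lit) : bool :=
  if W.2 then sigma W.1 else ~~ sigma W.1.

Definition satisfying (cls : seq clause) (sigma : nat -> bool) : Prop :=
  forall c, c \in cls ->
    (lit_val sigma (cX c) + lit_val sigma (cY c) + lit_val sigma (cZ c)
        = 1)%N.

Definition true_shoulder_or_knee (cls : seq clause) (sigma : nat -> bool)
  (P : vtx) : Prop :=
  (exists j W, inDelta cls (lvar W) j /\ lit_val sigma W /\
     (P = Sset j W \/ P = Kset cls j W)) \/
  (exists j, j < size cls /\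
     let c := clause_at cls j in
     [\/ lit_val sigma (cX c) /\ P = LXset cls j,
         lit_val sigma (cY c) /\ P = LYset cls j |
         lit_val sigma (cZ c) /\ P = LZset cls j]).

Definition G_sigma (n : nat) (cls : seq clause) (sigma : nat -> bool)
  (P P' : vtx) : Prop :=
  int_star n cls P P' \/
  (P = Bset /\ true_shoulder_or_knee cls sigma P') \/
  (P' = Bset /\ true_shoulder_or_knee cls sigma P).

(* Main.v *)
Require Import Defs.
From mathcomp Require Import all_boot finmap.
From mathcomp Require Import zify.
From Stdlib Require Import Classical ClassicalEpsilon.

Lemma atom_eqE (a b : atom) : (a == b) = (atom_enc a == atom_enc b).
Proof. by apply/eqP/eqP => [->|/(pcan_inj atom_encK)]. Qed.

Ltac asimp := rewrite ?inE ?atom_eqE /= ?xpair_eqE /=.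

Ltac slia := repeat match goal with q : seq vtx |- _ => progress change (@size _ q) with (@size vtx q) in * end; lia.

Section Sep.
Variable E : vtx -> vtx -> Prop.
Hypothesis Esym : forall P Q, E P Q -> E Q P.
Hypothesis Eirr : forall P, ~ E P P.
Hypothesis Ech : chordal E.

Definition walk (q : seq vtx) := forall k, k.+1 < size q -> E (nth fset0 q k) (nth fset0 q k.+1).

Lemma walk_cut q a b : a <= b -> b < size q -> walk q ->
  (0 < a -> E (nth fset0 q a.-1) (nth fset0 q b)) ->
  walk (take a q ++ drop b q).
Proof.
move=> ab bq wq junc k.
rewrite size_cat size_take size_drop.
have -> : (if a < size q then a else size q) = a by case: ifP => //; lia.
move=> hk.
rewrite !nth_cat size_take.
have -> : (if a < size q then a else size q) = a by case: ifP => //; lia.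
case: (ltnP k.+1 a) => h1.
  rewrite (ltnW h1) !nth_take //; last by lia. apply: wq; lia.
case: (ltnP k a) => h2.
  have ka : k = a.-1 by lia.
  rewrite nth_take // !nth_drop.
  have -> : k.+1 - a = 0 by lia.
  rewrite addn0 ka. apply: junc. lia.
rewrite !nth_drop.
have -> : b + (k.+1 - a) = (b + (k - a)).+1 by lia.
apply: wq. lia.
Qed.

Lemma sep_main : forall k (q : seq vtx) w, size q = k -> walk q -> 1 < size q ->
  w \notin q -> E w (nth fset0 q 0) -> E w (nth fset0 q (size q).-1) ->
  ~ E (nth fset0 q 0) (nth fset0 q (size q).-1) ->
  nth fset0 q 0 != nth fset0 q (size q).-1 ->
  (forall x, x \in q -> x != nth fset0 q 0 -> x != nth fset0 q (size q).-1 -> ~ E w x) ->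
  False.
Proof.
elim/ltn_ind => k IH q w sq wq s1 wnq ewu ewv nuv uv hint.
have cutP : forall a b, a <= b -> b < size q ->
  (0 < a -> E (nth fset0 q a.-1) (nth fset0 q b)) ->
  (a = 0 -> nth fset0 q b = nth fset0 q 0) ->
  a + (size q - b) < size q -> 1 < a + (size q - b) -> False.
  move=> a b ab bq junc a0 small big.
  set q' := take a q ++ drop b q.
  have sq' : size q' = a + (size q - b).
    rewrite /q' size_cat size_take size_drop.
    by have -> : (if a < size q then a else size q) = a by case: ifP => //; slia.
  have h0 : nth fset0 q' 0 = nth fset0 q 0.
    rewrite /q' nth_cat size_take.
    have -> : (if a < size q then a else size q) = a by case: ifP => //; slia.
    case: (posnP a) => [a0'|ap]; first by rewrite a0' /= nth_drop addn0 a0.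
    by rewrite nth_take.
  have hl : nth fset0 q' (size q').-1 = nth fset0 q (size q).-1.
    rewrite sq' /q' nth_cat size_take.
    have -> : (if a < size q then a else size q) = a by case: ifP => //; slia.
    have -> : (a + (size q - b)).-1 < a = false by slia.
    rewrite nth_drop. congr nth. slia.
  have memq : forall x, x \in q' -> x \in q.
    by move=> x; rewrite /q' mem_cat => /orP [/mem_take|/mem_drop].
  apply: (IH (size q') _ q' w); rewrite ?h0 ?hl ?sq' //.
  - by rewrite -sq.
  - exact: walk_cut.
  - by apply/negP => /memq; apply/negP.
  - by move=> x /memq xq; apply: hint.
case: (boolP (uniq q)) => uq; last first.
  have [a [b [ab bq eqab]]] : exists a b, [/\ a < b, b < size q & nth fset0 q a = nth fset0 q b].
    move: uq => /(uniqPn fset0) [a [b [ab bq eqab]]]. by exists a, b.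
  apply: (cutP a b) => //; try slia.
  - by move=> ap; rewrite -eqab; have := wq a.-1; rewrite prednK //; apply; slia.
  - by move=> a0; rewrite -eqab a0.
  - case: (ltnP 1 (a + (size q - b))) => // h.
    have a0 : a = 0 by slia. have bl : b = (size q).-1 by slia.
    by move: uv; rewrite -{1}a0 eqab bl eqxx.
case: (ltnP 2 (size q)) => s2; last first.
  have s2' : size q = 2 by slia.
  by apply: nuv; rewrite s2' /=; apply: wq; rewrite s2'.
have hu : uniq (w :: q) by rewrite /= wnq uq.
have hs : 4 <= size (w :: q) by exact: s2.
have hc : forall i, i < size (w :: q) -> E (nth fset0 (w :: q) i) (nth fset0 (w :: q) (i.+1 %% size (w :: q))).
  move=> i; rewrite /= => hi.
  case: i hi => [|i] hi /=.
    by rewrite modn_small /= ?ltnS; last exact: ltnW (ltnW s2).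
  case: (ltnP i.+1 (size q)) => h.
    rewrite modn_small /=; last slia. apply: wq. slia.
  have -> : i.+2 = (size q).+1 by slia.
  rewrite modnn /=. apply: Esym. have -> : i = (size q).-1 by slia. exact: ewv.
have [i [j [ij js ij1 nend eij]]] := Ech _ hu hs hc.
move: eij ij1 nend js.
case: i ij => [|i] ij /=.
  case: j ij => [//|j] _ /= ij1 nend js ewj.
  have jq : j < size q by slia.
  apply: (hint (nth fset0 q j)) => //.
  + exact: mem_nth.
  + rewrite nth_uniq //; try slia.
  + rewrite nth_uniq //; slia.
case: j ij => [//|j] ij /= ij1 nend js eij.
apply: (cutP i.+1 j) => //; try slia.
Qed.

End Sep.
Local Open Scope fset_scope.

Lemma nbE (b : bool) : (b == ~~ b) = false. Proof. by case: b. Qed.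
Lemma bnE (b : bool) : (~~ b == b) = false. Proof. by case: b. Qed.

Lemma neq_by (a : atom) (P Q : vtx) : a \in P -> a \notin Q -> P != Q.
Proof. by move=> aP aQ; apply/eqP => PQ; move: aQ; rewrite -PQ aP. Qed.

Lemma walk_cons E x y s : E x y -> walk E (y :: s) -> walk E (x :: y :: s).
Proof. by move=> exy ws [|k] //= hk; apply: ws. Qed.
Lemma walk1 E x : walk E [:: x].
Proof. by case. Qed.

Section Main.
Variables (n : nat) (cls : seq clause).
Hypothesis wf : wf_instance n cls.
Variable E : vtx -> vtx -> Prop.
Hypothesis HS : chordal_sandwich (Qvertex n cls) (int_star n cls) (forb n cls) E.

Lemma Esym P Q : E P Q -> E Q P.
Proof. by case: HS => [[_ h _] _ _ _]; apply: h. Qed.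
Lemma Eirr P : ~ E P P.
Proof. by case: HS => [[_ _ h] _ _ _]. Qed.
Lemma Ech : chordal E.
Proof. by case: HS. Qed.
Lemma Eint P Q : int_star n cls P Q -> E P Q.
Proof. by case: HS => _ _ h _; apply: h. Qed.
Lemma nedge P Q : Qsplit n cls P Q -> ~ E P Q.
Proof. by case: HS => _ _ _ h hq; apply: h; left. Qed.
Lemma nedge' P Q : Qsplit n cls Q P -> ~ E P Q.
Proof. by case: HS => _ _ _ h hq; apply: h; right. Qed.

Lemma edge P Q a : Qvertex n cls P -> Qvertex n cls Q -> P != Q -> a \in P -> a \in Q -> E P Q.
Proof. by move=> qp qq pq ap aq; apply: Eint; split => //; exists a. Qed.

Lemma sepL w u v mid : E w u -> E w v -> ~ E u v -> u != v ->
  walk E (u :: mid ++ [:: v]) -> w \notin mid -> (forall x, x \in mid -> ~ E w x) -> False.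
Proof.
move=> ewu ewv nuv uv wk wm hm.
have h0 : nth fset0 (u :: mid ++ [:: v]) 0 = u by [].
have hl : nth fset0 (u :: mid ++ [:: v]) (size (u :: mid ++ [:: v])).-1 = v.
  by rewrite nth_last /= last_cat.
apply: (@sep_main E (@Esym) Ech _ _ w (erefl _) wk); rewrite ?h0 ?hl //.
- by rewrite /= size_cat /= addn1.
- rewrite /= inE mem_cat !inE (negbTE wm) /=; apply/norP; split.
    by apply/eqP => wu; apply: (@Eirr u); rewrite -{1}wu.
  by apply/eqP => wv; apply: (@Eirr v); rewrite -{1}wv.
- move=> x; rewrite /= inE mem_cat inE => /orP [->//|/orP [xm|->//]] _ _.
  exact: hm.
Qed.

Ltac wk := repeat (apply: walk_cons; first by []); exact: walk1.

Lemma sep1 w u v a : E w u -> E w v -> ~ E u v -> u != v ->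
  E u a -> E a v -> w != a -> E w a.
Proof.
move=> ewu ewv nuv uv e1 e2 n1.
case: (classic (E w a)) => // h1; exfalso.
apply: (@sepL w u v [:: a] ewu ewv nuv uv) => /=; first by wk.
- by rewrite !inE.
- by move=> x; rewrite !inE => /eqP->.
Qed.

Lemma sep2 w u v a b : E w u -> E w v -> ~ E u v -> u != v ->
  E u a -> E a b -> E b v -> w != a -> w != b -> E w a \/ E w b.
Proof.
move=> ewu ewv nuv uv e1 e2 e3 n1 n2.
case: (classic (E w a)) => h1; first by left.
case: (classic (E w b)) => h2; first by right.
exfalso; apply: (@sepL w u v [:: a; b] ewu ewv nuv uv) => /=; first by wk.
- by rewrite !inE negb_or n1 n2.
- by move=> x; rewrite !inE => /orP [/eqP->|/eqP->].
Qed.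

Lemma sep3 w u v a b c : E w u -> E w v -> ~ E u v -> u != v ->
  E u a -> E a b -> E b c -> E c v -> w != a -> w != b -> w != c ->
  [\/ E w a, E w b | E w c].
Proof.
move=> ewu ewv nuv uv e1 e2 e3 e4 n1 n2 n3.
case: (classic (E w a)) => h1; first by constructor 1.
case: (classic (E w b)) => h2; first by constructor 2.
case: (classic (E w c)) => h3; first by constructor 3.
exfalso; apply: (@sepL w u v [:: a; b; c] ewu ewv nuv uv) => /=; first by wk.
- by rewrite !inE !negb_or n1 n2 n3.
- by move=> x; rewrite !inE => /or3P [/eqP->|/eqP->|/eqP->].
Qed.


Lemma QB i : i < n -> Qvertex n cls Bset.
Proof. by move=> hi; exists (Aset i); right; left; exists i. Qed.
Lemma QA i : i < n -> Qvertex n cls (Aset i).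
Proof. by move=> hi; exists Bset; left; left; exists i. Qed.
Lemma QH i b j : i < n -> j < size cls -> Qvertex n cls (Hset (i, b)).
Proof.
move=> hi hj; exists (Fset j); left; do 6 right; left; exists i, j.
by case: b; split => //; split => //; split => //; [right|left].
Qed.
Lemma QF i j : i < n -> j < size cls -> Qvertex n cls (Fset j).
Proof.
move=> hi hj; exists (Hset (pos i)); right; do 6 right; left; exists i, j.
by do 2 split => //; split => //; right.
Qed.
Lemma QS i b j : i < n -> inDelta cls i j -> Qvertex n cls (Sset j (i, b)).
Proof.
move=> hi hj; case: b.
  by exists (Sset j (ng i)); left; right; right; left; exists i, j, j.
by exists (Sset j (pos i)); right; right; right; left; exists i, j, j.
Qed.
Lemma QD j p : j < size cls -> 1 <= p <= 3 -> Qvertex n cls (Dset j p).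
Proof. by move=> hj hp; exists Bset; left; right; left; exists j, p. Qed.

Lemma nAB i : i < n -> ~ E Bset (Aset i).
Proof. by move=> hi; apply: nedge'; left; exists i. Qed.
Lemma nDB j p : j < size cls -> 1 <= p <= 3 -> ~ E Bset (Dset j p).
Proof. by move=> hj hp; apply: nedge'; right; left; exists j, p. Qed.
Lemma nSS i b j j' : i < n -> inDelta cls i j -> inDelta cls i j' ->
  ~ E (Sset j (i, b)) (Sset j' (i, ~~ b)).
Proof.
move=> hi h1 h2; case: b.
  by apply: nedge; right; right; left; exists i, j, j'.
by apply: nedge'; right; right; left; exists i, j', j.
Qed.
Lemma nHF i b j : i < n -> j < size cls -> ~ E (Hset (i, b)) (Fset j).
Proof.
move=> hi hj; apply: nedge; do 6 right; left; exists i, j.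
by case: b; split => //; split => //; split => //; [right|left].
Qed.


Ltac unf := rewrite /Bset /Hset /Aset /Sset /Dset /Fset /pos /ng.
Ltac asimp2 := rewrite ?inE ?atom_eqE /= ?xpair_eqE /= ?eqxx ?nbE ?bnE /=.
Ltac fin := unf; asimp2; try done;
  repeat match goal with b : bool |- _ => destruct b end; asimp2; done.
Ltac dneq := unf; match goal with |- is_true (negb (@eq_op _ (fsetU (fset1 ?a1) (fset1 ?a2)) (fsetU (fset1 ?b1) (fset1 ?b2)))) =>
  first [ apply: (@neq_by a1); fin | apply: (@neq_by a2); fin
        | rewrite eq_sym; apply: (@neq_by b1); fin
        | rewrite eq_sym; apply: (@neq_by b2); fin ] end.

Lemma noSS i b j j' : i < n -> inDelta cls i j -> inDelta cls i j' ->
  E Bset (Sset j (i, b)) -> E Bset (Sset j' (i, ~~ b)) -> False.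
Proof.
move=> hi h1 h2 e1 e2.
have hj : j < size cls by case/andP: h1.
apply: (@nAB i hi); apply: (@sep1 Bset (Sset j (i, b)) (Sset j' (i, ~~ b))) => //.
- exact: nSS.
- dneq.
- apply: (@edge _ _ (Alpha (i, b))); [exact: QS|exact: QA|dneq|fin|fin].
- apply: (@edge _ _ (Alpha (i, ~~ b))); [exact: QA|exact: QS|dneq|fin|fin].
- dneq.
Qed.


Section Clause.
Variables (j x y z : nat) (ax ay az : bool).
Hypothesis hj : j < size cls.
Hypothesis hc : clause_at cls j = ((x, ax), (y, ay), (z, az)).

Let hwf : [/\ x < n, y < n & z < n] /\ [/\ x != y, x != z & y != z].
Proof. by have := @wf _ (mem_nth default_clause hj); rewrite -/(clause_at cls j) hc /lvar /cX /cY /cZ /=. Qed.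
Let hx : x < n. Proof. by case: hwf => [[]]. Qed.
Let hy : y < n. Proof. by case: hwf => [[]]. Qed.
Let hz : z < n. Proof. by case: hwf => [[]]. Qed.
Let exy : (x == y) = false. Proof. by case: hwf => _ [/negbTE]. Qed.
Let exz : (x == z) = false. Proof. by case: hwf => _ [_ /negbTE]. Qed.
Let eyz : (y == z) = false. Proof. by case: hwf => _ [_ _ /negbTE]. Qed.
Let eyx : (y == x) = false. Proof. by rewrite eq_sym exy. Qed.
Let ezx : (z == x) = false. Proof. by rewrite eq_sym exz. Qed.
Let ezy : (z == y) = false. Proof. by rewrite eq_sym eyz. Qed.

Let dx : inDelta cls x j. Proof. by rewrite /inDelta hj hc /= eqxx. Qed.
Let dy : inDelta cls y j. Proof. by rewrite /inDelta hj hc /= eqxx orbT. Qed.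
Let dz : inDelta cls z j. Proof. by rewrite /inDelta hj hc /= eqxx !orbT. Qed.

Lemma dX : inDelta cls x j. Proof. exact: dx. Qed.
Lemma dY : inDelta cls y j. Proof. exact: dy. Qed.
Lemma dZ : inDelta cls z j. Proof. exact: dz. Qed.

Ltac csimp := rewrite /Kset /lneg /LXset /LYset /LZset hc /cX /cY /cZ /= ?xpair_eqE /=
   ?eqxx ?exy ?exz ?eyz ?eyx ?ezx ?ezy ?nbE ?bnE ?negbK /= ?eqxx ?nbE ?bnE ?negbK /=.

Lemma KX : Kset cls j (x, ax) = [fset Beta j (x, ~~ ax); Lam j].
Proof. by csimp. Qed.
Lemma KY : Kset cls j (y, ay) = [fset Beta j (y, ~~ ay); Lam j].
Proof. by csimp; rewrite ?orbT. Qed.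
Lemma KZ : Kset cls j (z, az) = [fset Beta j (z, ~~ az); Lam j].
Proof. by csimp; rewrite ?orbT. Qed.
Lemma KnX : Kset cls j (x, ~~ ax) = [fset Beta j (x, ax); Gamma j 1].
Proof. by csimp. Qed.
Lemma KnY : Kset cls j (y, ~~ ay) = [fset Beta j (y, ay); Gamma j 2].
Proof. by csimp. Qed.
Lemma KnZ : Kset cls j (z, ~~ az) = [fset Beta j (z, az); Gamma j 3].
Proof. by csimp. Qed.
Lemma LXe : LXset cls j = [fset Beta j (x, ~~ ax); Gamma j 2].
Proof. by csimp. Qed.
Lemma LYe : LYset cls j = [fset Beta j (y, ~~ ay); Gamma j 3].
Proof. by csimp. Qed.
Lemma LZe : LZset cls j = [fset Beta j (z, ~~ az); Gamma j 1].
Proof. by csimp. Qed.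


Ltac d8 := do 7 right; exists j; split => //; rewrite /= hc /=.
Lemma qKnX : Qvertex n cls (Kset cls j (x, ~~ ax)).
Proof. by exists (Kset cls j (x, ax)); left; d8; left. Qed.
Lemma qKX : Qvertex n cls (Kset cls j (x, ax)).
Proof. by exists (Kset cls j (x, ~~ ax)); right; d8; left. Qed.
Lemma qKnY : Qvertex n cls (Kset cls j (y, ~~ ay)).
Proof. by exists (Kset cls j (y, ay)); left; d8; right; left. Qed.
Lemma qKY : Qvertex n cls (Kset cls j (y, ay)).
Proof. by exists (Kset cls j (y, ~~ ay)); right; d8; right; left. Qed.
Lemma qKnZ : Qvertex n cls (Kset cls j (z, ~~ az)).
Proof. by exists (Kset cls j (z, az)); left; d8; do 2 right; left. Qed.
Lemma qKZ : Qvertex n cls (Kset cls j (z, az)).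
Proof. by exists (Kset cls j (z, ~~ az)); right; d8; do 2 right; left. Qed.
Lemma qLX : Qvertex n cls (LXset cls j).
Proof. by exists (Kset cls j (x, ~~ ax)); right; d8; do 3 right; left. Qed.
Lemma qLY : Qvertex n cls (LYset cls j).
Proof. by exists (Kset cls j (y, ~~ ay)); right; d8; do 4 right; left. Qed.
Lemma qLZ : Qvertex n cls (LZset cls j).
Proof. by exists (Kset cls j (z, ~~ az)); right; d8; do 5 right; left. Qed.
Lemma qD1 : Qvertex n cls (Dset j 1). Proof. by apply: QD. Qed.
Lemma qD2 : Qvertex n cls (Dset j 2). Proof. by apply: QD. Qed.
Lemma qD3 : Qvertex n cls (Dset j 3). Proof. by apply: QD. Qed.
Lemma qF : Qvertex n cls (Fset j). Proof. exact: QF hx hj. Qed.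
Lemma qB : Qvertex n cls Bset. Proof. exact: QB hx. Qed.
Lemma qHx b : Qvertex n cls (Hset (x, b)). Proof. exact: QH hx hj. Qed.
Lemma qHy b : Qvertex n cls (Hset (y, b)). Proof. exact: QH hy hj. Qed.
Lemma qHz b : Qvertex n cls (Hset (z, b)). Proof. exact: QH hz hj. Qed.
Lemma qSx b : Qvertex n cls (Sset j (x, b)). Proof. exact: QS hx dx. Qed.
Lemma qSy b : Qvertex n cls (Sset j (y, b)). Proof. exact: QS hy dy. Qed.
Lemma qSz b : Qvertex n cls (Sset j (z, b)). Proof. exact: QS hz dz. Qed.

Lemma nKKX : ~ E (Kset cls j (x, ~~ ax)) (Kset cls j (x, ax)).
Proof. by apply: nedge; d8; left. Qed.
Lemma nKKY : ~ E (Kset cls j (y, ~~ ay)) (Kset cls j (y, ay)).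
Proof. by apply: nedge; d8; right; left. Qed.
Lemma nKKZ : ~ E (Kset cls j (z, ~~ az)) (Kset cls j (z, az)).
Proof. by apply: nedge; d8; do 2 right; left. Qed.
Lemma nKLX : ~ E (Kset cls j (x, ~~ ax)) (LXset cls j).
Proof. by apply: nedge; d8; do 3 right; left. Qed.
Lemma nKLY : ~ E (Kset cls j (y, ~~ ay)) (LYset cls j).
Proof. by apply: nedge; d8; do 4 right; left. Qed.
Lemma nKLZ : ~ E (Kset cls j (z, ~~ az)) (LZset cls j).
Proof. by apply: nedge; d8; do 5 right; left. Qed.
Lemma nSKYX : ~ E (Sset j (y, ay)) (Kset cls j (x, ax)).
Proof. by apply: nedge; d8; do 6 right; left. Qed.
Lemma nSKZY : ~ E (Sset j (z, az)) (Kset cls j (y, ay)).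
Proof. by apply: nedge; d8; do 7 right; left. Qed.
Lemma nSKXZ : ~ E (Sset j (x, ax)) (Kset cls j (z, az)).
Proof. by apply: nedge; d8; do 8 right; left. Qed.


Ltac krw := rewrite ?KX ?KY ?KZ ?KnX ?KnY ?KnZ ?LXe ?LYe ?LZe.
Ltac vrw := rewrite ?exy ?exz ?eyz ?eyx ?ezx ?ezy.
Ltac cfin := krw; unf; asimp2; vrw; asimp2; rewrite ?negbK ?nbE ?bnE ?eqxx /=; done.
Ltac cdneq := krw; unf; match goal with |- is_true (negb (@eq_op _ (fsetU (fset1 ?a1) (fset1 ?a2)) (fsetU (fset1 ?b1) (fset1 ?b2)))) =>
  first [ apply: (@neq_by a1); cfin | apply: (@neq_by a2); cfin
        | rewrite eq_sym; apply: (@neq_by b1); cfin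
        | rewrite eq_sym; apply: (@neq_by b2); cfin ] end.
Ltac qv := match goal with
  | |- Qvertex _ _ Bset => exact: qB
  | |- Qvertex _ _ (Fset _) => exact: qF
  | |- Qvertex _ _ (Dset _ 1) => exact: qD1
  | |- Qvertex _ _ (Dset _ 2) => exact: qD2
  | |- Qvertex _ _ (Dset _ 3) => exact: qD3
  | |- Qvertex _ _ (Hset (x, _)) => exact: qHx
  | |- Qvertex _ _ (Hset (y, _)) => exact: qHy
  | |- Qvertex _ _ (Hset (z, _)) => exact: qHz
  | |- Qvertex _ _ (Sset _ (x, _)) => exact: qSx
  | |- Qvertex _ _ (Sset _ (y, _)) => exact: qSy
  | |- Qvertex _ _ (Sset _ (z, _)) => exact: qSz
  | |- Qvertex _ _ (Kset _ _ (x, ax)) => exact: qKX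
  | |- Qvertex _ _ (Kset _ _ (y, ay)) => exact: qKY
  | |- Qvertex _ _ (Kset _ _ (z, az)) => exact: qKZ
  | |- Qvertex _ _ (Kset _ _ (x, ~~ ax)) => exact: qKnX
  | |- Qvertex _ _ (Kset _ _ (y, ~~ ay)) => exact: qKnY
  | |- Qvertex _ _ (Kset _ _ (z, ~~ az)) => exact: qKnZ
  | |- Qvertex _ _ (LXset _ _) => exact: qLX
  | |- Qvertex _ _ (LYset _ _) => exact: qLY
  | |- Qvertex _ _ (LZset _ _) => exact: qLZ
  end.
Ltac ed a := apply: (@edge _ _ a); [qv|qv|cdneq|cfin|cfin].

Lemma eBH b : E Bset (Hset (x, b)). Proof. by ed Delta. Qed.
Lemma eBF : E Bset (Fset j). Proof. by ed Mu. Qed.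

Lemma PnX : E Bset (Sset j (x, ~~ ax)) \/ E Bset (Kset cls j (x, ax)).
Proof.
apply: (@sep2 Bset (Hset (x, ~~ ax)) (Fset j)).
- by ed Delta.
- by ed Mu.
- exact: nHF.
- cdneq.
- by ed (Alpha (x, ~~ ax)).
- by ed (Beta j (x, ~~ ax)).
- by ed (Lam j).
- cdneq.
- cdneq.
Qed.


Lemma PX : E Bset (Sset j (x, ax)) \/ E Bset (Kset cls j (x, ~~ ax)).
Proof.
have [h|h|h] : [\/ E Bset (Sset j (x, ax)), E Bset (Kset cls j (x, ~~ ax)) | E Bset (Dset j 1)].
  apply: (@sep3 Bset (Hset (x, ax)) (Fset j)).
  - by ed Delta.
  - by ed Mu.
  - by apply: nHF.
  - cdneq.
  - by ed (Alpha (x, ax)).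
  - by ed (Beta j (x, ax)).
  - by ed (Gamma j 1).
  - by ed (Lam j).
  - cdneq.
  - cdneq.
  - cdneq.
- by left.
- by right.
- by exfalso; apply: (@nDB j 1).
Qed.

Lemma PnY : E Bset (Sset j (y, ~~ ay)) \/ E Bset (Kset cls j (y, ay)).
Proof.
apply: (@sep2 Bset (Hset (y, ~~ ay)) (Fset j)).
- by ed Delta.
- by ed Mu.
- exact: nHF.
- cdneq.
- by ed (Alpha (y, ~~ ay)).
- by ed (Beta j (y, ~~ ay)).
- by ed (Lam j).
- cdneq.
- cdneq.
Qed.


Lemma PY : E Bset (Sset j (y, ay)) \/ E Bset (Kset cls j (y, ~~ ay)).
Proof.
have [h|h|h] : [\/ E Bset (Sset j (y, ay)), E Bset (Kset cls j (y, ~~ ay)) | E Bset (Dset j 2)].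
  apply: (@sep3 Bset (Hset (y, ay)) (Fset j)).
  - by ed Delta.
  - by ed Mu.
  - by apply: nHF.
  - cdneq.
  - by ed (Alpha (y, ay)).
  - by ed (Beta j (y, ay)).
  - by ed (Gamma j 2).
  - by ed (Lam j).
  - cdneq.
  - cdneq.
  - cdneq.
- by left.
- by right.
- by exfalso; apply: (@nDB j 2).
Qed.

Lemma PnZ : E Bset (Sset j (z, ~~ az)) \/ E Bset (Kset cls j (z, az)).
Proof.
apply: (@sep2 Bset (Hset (z, ~~ az)) (Fset j)).
- by ed Delta.
- by ed Mu.
- exact: nHF.
- cdneq.
- by ed (Alpha (z, ~~ az)).
- by ed (Beta j (z, ~~ az)).
- by ed (Lam j).
- cdneq.
- cdneq.
Qed.


Lemma PZ : E Bset (Sset j (z, az)) \/ E Bset (Kset cls j (z, ~~ az)).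
Proof.
have [h|h|h] : [\/ E Bset (Sset j (z, az)), E Bset (Kset cls j (z, ~~ az)) | E Bset (Dset j 3)].
  apply: (@sep3 Bset (Hset (z, az)) (Fset j)).
  - by ed Delta.
  - by ed Mu.
  - by apply: nHF.
  - cdneq.
  - by ed (Alpha (z, az)).
  - by ed (Beta j (z, az)).
  - by ed (Gamma j 3).
  - by ed (Lam j).
  - cdneq.
  - cdneq.
  - cdneq.
- by left.
- by right.
- by exfalso; apply: (@nDB j 3).
Qed.


Lemma QQX : E Bset (Kset cls j (x, ax)) -> E Bset (Kset cls j (x, ~~ ax)) -> False.
Proof.
move=> e1 e2; apply: (@nDB j 1) => //.
apply: (@sep1 Bset (Kset cls j (x, ~~ ax)) (Kset cls j (x, ax))) => //.
- exact: nKKX.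
- cdneq.
- by ed (Gamma j 1).
- by ed (Lam j).
- cdneq.
Qed.
Lemma QQY : E Bset (Kset cls j (y, ay)) -> E Bset (Kset cls j (y, ~~ ay)) -> False.
Proof.
move=> e1 e2; apply: (@nDB j 2) => //.
apply: (@sep1 Bset (Kset cls j (y, ~~ ay)) (Kset cls j (y, ay))) => //.
- exact: nKKY.
- cdneq.
- by ed (Gamma j 2).
- by ed (Lam j).
- cdneq.
Qed.
Lemma QQZ : E Bset (Kset cls j (z, az)) -> E Bset (Kset cls j (z, ~~ az)) -> False.
Proof.
move=> e1 e2; apply: (@nDB j 3) => //.
apply: (@sep1 Bset (Kset cls j (z, ~~ az)) (Kset cls j (z, az))) => //.
- exact: nKKZ.
- cdneq.
- by ed (Gamma j 3).
- by ed (Lam j).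
- cdneq.
Qed.

Lemma AMXY : E Bset (Sset j (y, ay)) -> E Bset (Kset cls j (x, ax)) -> E Bset (Kset cls j (y, ~~ ay)).
Proof.
move=> e1 e2.
have [//|h] : E Bset (Kset cls j (y, ~~ ay)) \/ E Bset (Dset j 2).
  apply: (@sep2 Bset (Sset j (y, ay)) (Kset cls j (x, ax))) => //.
  - exact: nSKYX.
  - cdneq.
  - by ed (Beta j (y, ay)).
  - by ed (Gamma j 2).
  - by ed (Lam j).
  - cdneq.
  - cdneq.
by exfalso; apply: (@nDB j 2).
Qed.

Lemma AMYZ : E Bset (Sset j (z, az)) -> E Bset (Kset cls j (y, ay)) -> E Bset (Kset cls j (z, ~~ az)).
Proof.
move=> e1 e2.
have [//|h] : E Bset (Kset cls j (z, ~~ az)) \/ E Bset (Dset j 3).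
  apply: (@sep2 Bset (Sset j (z, az)) (Kset cls j (y, ay))) => //.
  - exact: nSKZY.
  - cdneq.
  - by ed (Beta j (z, az)).
  - by ed (Gamma j 3).
  - by ed (Lam j).
  - cdneq.
  - cdneq.
by exfalso; apply: (@nDB j 3).
Qed.

Lemma AMZX : E Bset (Sset j (x, ax)) -> E Bset (Kset cls j (z, az)) -> E Bset (Kset cls j (x, ~~ ax)).
Proof.
move=> e1 e2.
have [//|h] : E Bset (Kset cls j (x, ~~ ax)) \/ E Bset (Dset j 1).
  apply: (@sep2 Bset (Sset j (x, ax)) (Kset cls j (z, az))) => //.
  - exact: nSKXZ.
  - cdneq.
  - by ed (Beta j (x, ax)).
  - by ed (Gamma j 1).
  - by ed (Lam j).
  - cdneq.
  - cdneq.
by exfalso; apply: (@nDB j 1).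
Qed.

Lemma LL_X : ~ E Bset (Sset j (x, ~~ ax)) -> E Bset (LXset cls j).
Proof.
move=> ns.
have [//|//|h] : [\/ E Bset (Sset j (x, ~~ ax)), E Bset (LXset cls j) | E Bset (Dset j 2)].
  apply: (@sep3 Bset (Hset (x, ~~ ax)) (Fset j)).
  - by ed Delta.
  - by ed Mu.
  - by apply: nHF.
  - cdneq.
  - by ed (Alpha (x, ~~ ax)).
  - by ed (Beta j (x, ~~ ax)).
  - by ed (Gamma j 2).
  - by ed (Lam j).
  - cdneq.
  - cdneq.
  - cdneq.
by exfalso; apply: (@nDB j 2).
Qed.
Lemma LL_Y : ~ E Bset (Sset j (y, ~~ ay)) -> E Bset (LYset cls j).
Proof.
move=> ns.
have [//|//|h] : [\/ E Bset (Sset j (y, ~~ ay)), E Bset (LYset cls j) | E Bset (Dset j 3)].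
  apply: (@sep3 Bset (Hset (y, ~~ ay)) (Fset j)).
  - by ed Delta.
  - by ed Mu.
  - by apply: nHF.
  - cdneq.
  - by ed (Alpha (y, ~~ ay)).
  - by ed (Beta j (y, ~~ ay)).
  - by ed (Gamma j 3).
  - by ed (Lam j).
  - cdneq.
  - cdneq.
  - cdneq.
by exfalso; apply: (@nDB j 3).
Qed.
Lemma LL_Z : ~ E Bset (Sset j (z, ~~ az)) -> E Bset (LZset cls j).
Proof.
move=> ns.
have [//|//|h] : [\/ E Bset (Sset j (z, ~~ az)), E Bset (LZset cls j) | E Bset (Dset j 1)].
  apply: (@sep3 Bset (Hset (z, ~~ az)) (Fset j)).
  - by ed Delta.
  - by ed Mu.
  - by apply: nHF.
  - cdneq.
  - by ed (Alpha (z, ~~ az)).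
  - by ed (Beta j (z, ~~ az)).
  - by ed (Gamma j 1).
  - by ed (Lam j).
  - cdneq.
  - cdneq.
  - cdneq.
by exfalso; apply: (@nDB j 1).
Qed.

Lemma ALL : E Bset (Kset cls j (x, ~~ ax)) -> E Bset (Kset cls j (y, ~~ ay)) ->
  E Bset (Kset cls j (z, ~~ az)) -> False.
Proof.
move=> ea eb ec.
set a := Kset cls j (x, ~~ ax); set b := Kset cls j (y, ~~ ay); set c := Kset cls j (z, ~~ az).
have eab : E a b.
  case: (classic (E a b)) => // h; exfalso.
  have [h1|h1] : E Bset (Dset j 1) \/ E Bset (Dset j 2).
    apply: (@sep2 Bset a b) => //; rewrite /a /b.
    - cdneq.
    - by ed (Gamma j 1).
    - by ed (Lam j).
    - by ed (Gamma j 2).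
    - cdneq.
    - cdneq.
  - by apply: (@nDB j 1).
  - by apply: (@nDB j 2).
have ebc : E b c.
  case: (classic (E b c)) => // h; exfalso.
  have [h1|h1] : E Bset (Dset j 2) \/ E Bset (Dset j 3).
    apply: (@sep2 Bset b c) => //; rewrite /b /c.
    - cdneq.
    - by ed (Gamma j 2).
    - by ed (Lam j).
    - by ed (Gamma j 3).
    - cdneq.
    - cdneq.
  - by apply: (@nDB j 2).
  - by apply: (@nDB j 3).
have hKZ : E b (Kset cls j (z, az)) -> False.
  move=> h.
  have [h1|h1] : E b (LYset cls j) \/ E b (Kset cls j (y, ay)).
    apply: (@sep2 b c (Kset cls j (z, az))) => //; rewrite /b /c.
    - exact: nKKZ.
    - cdneq.
    - by ed (Gamma j 3).
    - by ed (Beta j (y, ~~ ay)).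
    - by ed (Lam j).
    - cdneq.
    - cdneq.
  - exact: nKLY h1.
  - exact: nKKY h1.
have hLZ : E b (LZset cls j) -> False.
  move=> h.
  have [h1|h1|h1] : [\/ E b (LYset cls j), E b (Kset cls j (y, ay)) | E b (Kset cls j (z, az))].
    apply: (@sep3 b c (LZset cls j)) => //; rewrite /b /c.
    - exact: nKLZ.
    - cdneq.
    - by ed (Gamma j 3).
    - by ed (Beta j (y, ~~ ay)).
    - by ed (Lam j).
    - by ed (Beta j (z, ~~ az)).
    - cdneq.
    - cdneq.
    - cdneq.
  - exact: nKLY h1.
  - exact: nKKY h1.
  - exact: hKZ h1.
have hKX : E b (Kset cls j (x, ax)) -> False.
  move=> h.
  have [h1|h1] : E b (LZset cls j) \/ E b (Kset cls j (z, az)).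
    apply: (@sep2 b a (Kset cls j (x, ax))) => //; rewrite /a /b.
    - exact: Esym.
    - exact: nKKX.
    - cdneq.
    - by ed (Gamma j 1).
    - by ed (Beta j (z, ~~ az)).
    - by ed (Lam j).
    - cdneq.
    - cdneq.
  - exact: hLZ h1.
  - exact: hKZ h1.
have [h1|h1|h1] : [\/ E b (LZset cls j), E b (Kset cls j (z, az)) | E b (Kset cls j (x, ax))].
  apply: (@sep3 b a (LXset cls j)) => //; rewrite /a /b.
  - exact: Esym.
  - by ed (Gamma j 2).
  - exact: nKLX.
  - cdneq.
  - by ed (Gamma j 1).
  - by ed (Beta j (z, ~~ az)).
  - by ed (Lam j).
  - by ed (Beta j (x, ~~ ax)).
  - cdneq.
  - cdneq.
  - cdneq.
- exact: hLZ h1.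
- exact: hKZ h1.
- exact: hKX h1.
Qed.
End Clause.
End Main.

Section Final.
Variables (n : nat) (cls : seq clause).
Hypothesis wf : wf_instance n cls.
Variable E : vtx -> vtx -> Prop.
Hypothesis HS : chordal_sandwich (Qvertex n cls) (int_star n cls) (forb n cls) E.


Lemma inD_lt i j : inDelta cls i j -> (j < size cls) /\ i < n.
Proof.
case/andP=> hj; case hc: (clause_at cls j) => [[[x ax] [y ay]] [z az]].
have [[hx hy hz] _] := @wf _ (mem_nth default_clause hj).
move: hx hy hz; rewrite -/(clause_at cls j) hc /lvar /cX /cY /cZ /= => hx hy hz.
by case/or3P => /eqP <-.
Qed.

Arguments inD_lt {i j}.

Lemma clause_case i j : inDelta cls i j -> exists x y z ax ay az,
  [/\ j < size cls, clause_at cls j = ((x, ax), (y, ay), (z, az)) & [\/ i = x, i = y | i = z]].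
Proof.
move=> hd; have [hj _] := inD_lt hd; move: hd.
case/andP=> _; case hc: (clause_at cls j) => [[[x ax] [y ay]] [z az]].
rewrite /lvar /cX /cY /cZ /= => h.
exists x, y, z, ax, ay, az; split => //.
by case/or3P: h => /eqP ->; [constructor 1|constructor 2|constructor 3].
Qed.

Arguments clause_case {i j}.

Lemma bool_cases (b a : bool) : b = a \/ b = ~~ a.
Proof. by case: a; case: b; auto. Qed.

Lemma Pgen i j b : inDelta cls i j ->
  E Bset (Sset j (i, b)) \/ E Bset (Kset cls j (i, ~~ b)).
Proof.
move=> hd; have [x [y [z [ax [ay [az [hj hc hi]]]]]]] := clause_case hd.
case: hi => ->.
- case: (bool_cases b ax) => ->; first exact: (@PX _ _ wf _ HS _ _ _ _ _ _ _ hj hc).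
  by rewrite negbK; exact: (@PnX _ _ wf _ HS _ _ _ _ _ _ _ hj hc).
- case: (bool_cases b ay) => ->; first exact: (@PY _ _ wf _ HS _ _ _ _ _ _ _ hj hc).
  by rewrite negbK; exact: (@PnY _ _ wf _ HS _ _ _ _ _ _ _ hj hc).
- case: (bool_cases b az) => ->; first exact: (@PZ _ _ wf _ HS _ _ _ _ _ _ _ hj hc).
  by rewrite negbK; exact: (@PnZ _ _ wf _ HS _ _ _ _ _ _ _ hj hc).
Qed.

Arguments Pgen {i j} b.

Lemma Qgen i j b : inDelta cls i j ->
  E Bset (Kset cls j (i, b)) -> E Bset (Kset cls j (i, ~~ b)) -> False.
Proof.
move=> hd; have [x [y [z [ax [ay [az [hj hc hi]]]]]]] := clause_case hd.
case: hi => ->.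
- case: (bool_cases b ax) => ->; first exact: (@QQX _ _ wf _ HS _ _ _ _ _ _ _ hj hc).
  by rewrite negbK => h1 h2; exact: (@QQX _ _ wf _ HS _ _ _ _ _ _ _ hj hc h2 h1).
- case: (bool_cases b ay) => ->; first exact: (@QQY _ _ wf _ HS _ _ _ _ _ _ _ hj hc).
  by rewrite negbK => h1 h2; exact: (@QQY _ _ wf _ HS _ _ _ _ _ _ _ hj hc h2 h1).
- case: (bool_cases b az) => ->; first exact: (@QQZ _ _ wf _ HS _ _ _ _ _ _ _ hj hc).
  by rewrite negbK => h1 h2; exact: (@QQZ _ _ wf _ HS _ _ _ _ _ _ _ hj hc h2 h1).
Qed.

Arguments Qgen {i j} b.

Definition sig (i : nat) : bool :=
  if excluded_middle_informative (exists j, inDelta cls i j /\ E Bset (Sset j (i, true)))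
  then true else false.

Lemma lit_valN s i b : lit_val s (i, ~~ b) = ~~ lit_val s (i, b).
Proof. by case: b => //=; rewrite negbK. Qed.

Lemma key i j b : inDelta cls i j ->
  (E Bset (Sset j (i, b)) <-> lit_val sig (i, b)) /\
  (E Bset (Kset cls j (i, b)) <-> lit_val sig (i, b)).
Proof.
move=> hd; have [hj hi] := inD_lt hd.
rewrite /lit_val /= /sig.
case: excluded_middle_informative => [[j0 [hd0 e0]]|hn].
- have nS : ~ E Bset (Sset j (i, false)).
    by move=> h; apply: (@noSS _ _ _ HS i true j0 j hi hd0 hd e0 h).
  have kT : E Bset (Kset cls j (i, true)).
    by case: (Pgen false hd).
  have nK : ~ E Bset (Kset cls j (i, false)).
    by move=> h; apply: (Qgen true hd kT h).
  have sT : E Bset (Sset j (i, true)).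
    by case: (Pgen true hd).
  by case: b => /=; split; split.
- have nS : ~ E Bset (Sset j (i, true)).
    by move=> h; apply: hn; exists j.
  have kF : E Bset (Kset cls j (i, false)).
    by case: (Pgen true hd).
  have nK : ~ E Bset (Kset cls j (i, true)).
    by move=> h; apply: (Qgen true hd h kF).
  have sF : E Bset (Sset j (i, false)).
    by case: (Pgen false hd).
  by case: b => /=; split; split.
Qed.


Lemma inDx j x y z ax ay az : j < size cls -> clause_at cls j = ((x, ax), (y, ay), (z, az)) ->
  [/\ inDelta cls x j, inDelta cls y j & inDelta cls z j].
Proof. by move=> hj hc; rewrite /inDelta hj hc /lvar /cX /cY /cZ /= !eqxx !orbT. Qed.

Arguments inDx {j x y z ax ay az}.
Arguments key {i j} b.

Lemma satP : satisfying cls (sig).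
Proof.
move=> c hcin.
have hj : index c cls < size cls by rewrite index_mem.
have hcj : clause_at cls (index c cls) = c by rewrite /clause_at nth_index.
move: hj hcj; set j := index c cls.
clearbody j; case: c hcin => [[[x ax] [y ay]] [z az]] _ hj hc.
rewrite /cX /cY /cZ /=.
have [dx dy dz] := inDx hj hc.
have kx b := key b dx; have ky b := key b dy; have kz b := key b dz.
have h1 : lit_val (sig) (x, ax) -> lit_val (sig) (y, ay) -> False.
  move=> vx vy.
  have := @AMXY _ _ wf _ HS _ _ _ _ _ _ _ hj hc ((ky ay).1.2 vy) ((kx ax).2.2 vx).
  by move/((ky (~~ ay)).2.1); rewrite lit_valN vy.
have h2 : lit_val (sig) (y, ay) -> lit_val (sig) (z, az) -> False.
  move=> vy vz.
  have := @AMYZ _ _ wf _ HS _ _ _ _ _ _ _ hj hc ((kz az).1.2 vz) ((ky ay).2.2 vy).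
  by move/((kz (~~ az)).2.1); rewrite lit_valN vz.
have h3 : lit_val (sig) (z, az) -> lit_val (sig) (x, ax) -> False.
  move=> vz vx.
  have := @AMZX _ _ wf _ HS _ _ _ _ _ _ _ hj hc ((kx ax).1.2 vx) ((kz az).2.2 vz).
  by move/((kx (~~ ax)).2.1); rewrite lit_valN vx.
have h4 : ~~ lit_val (sig) (x, ax) -> ~~ lit_val (sig) (y, ay) ->
          ~~ lit_val (sig) (z, az) -> False.
  move=> vx vy vz.
  apply: (@ALL _ _ wf _ HS _ _ _ _ _ _ _ hj hc).
  - by apply/(kx (~~ ax)).2; rewrite lit_valN.
  - by apply/(ky (~~ ay)).2; rewrite lit_valN.
  - by apply/(kz (~~ az)).2; rewrite lit_valN.
move: h1 h2 h3 h4.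
case: (lit_val (sig) (x, ax)); case: (lit_val (sig) (y, ay));
  case: (lit_val (sig) (z, az)) => //= H1 H2 H3 H4;
  solve [ exfalso; by [apply: H1|apply: H2|apply: H3|apply: H4] ].
Qed.

Lemma tsk P : true_shoulder_or_knee cls (sig) P -> E Bset P.
Proof.
case => [[j [[i b] [hd [hv [->|->]]]]] | [j [hj]]].
- by apply/(key b hd).1.
- by apply/(key b hd).2.
case hc: (clause_at cls j) => [[[x ax] [y ay]] [z az]].
have [dx dy dz] := inDx hj hc.
rewrite /cX /cY /cZ /=.
case => [[hv ->]|[hv ->]|[hv ->]].
- apply: (@LL_X _ _ wf _ HS _ _ _ _ _ _ _ hj hc).
  by move/((key (~~ ax) dx).1); rewrite lit_valN hv.
- apply: (@LL_Y _ _ wf _ HS _ _ _ _ _ _ _ hj hc).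
  by move/((key (~~ ay) dy).1); rewrite lit_valN hv.
- apply: (@LL_Z _ _ wf _ HS _ _ _ _ _ _ _ hj hc).
  by move/((key (~~ az) dz).1); rewrite lit_valN hv.
Qed.

Lemma GP P P' : G_sigma n cls (sig) P P' -> E P P'.
Proof.
case => [hi|[[-> ht]|[-> ht]]].
- exact: (@Eint _ _ _ HS).
- exact: tsk.
- by apply: (@Esym _ _ _ HS); apply: tsk.
Qed.

End Final.

Theorem lemma11 (n : nat) (cls : seq clause) :
  wf_instance n cls ->
  forall E : vtx -> vtx -> Prop,
    chordal_sandwich (Qvertex n cls) (int_star n cls) (forb n cls) E ->
    exists sigma : nat -> bool,
      satisfying cls sigma /\
      (forall P P', G_sigma n cls sigma P P' -> E P P').
Proof.
move=> wf E HS; exists (sig cls E); split.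
- exact: (@satP n cls wf E HS).
- exact: (@GP n cls wf E HS).
Qed.
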